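(* Let $G$ be a $k$-colorable chordal graph, let $T$ be a clique of $G$ with $k-1\le|T|$, and let $v\in T$. If $\mathcal{C}^c_k(G,T)$ is a $(k-1,k)$-color-complete graph, then $\mathcal{C}^c_k(G,T\setminus\{v\})$ is a $(k-2,k)$-color-complete graph. If $\mathcal{C}^c_k(G,T)$ is a forest that satisfies the injective neighborhood property, then $\mathcal{C}^c_k(G,T\setminus\{v\})$ is a forest that satisfies the injective neighborhood property.
   Context: A chordal graph has no induced cycle of length $>3$. A $k$-coloring of $G$ is a map $\alpha:V(G)\to\{1,\dots,k\}$ with $\alpha(u)\ne\alpha(w)$ for all edges $uw$. $\mathcal{C}_k(G)$ has the $k$-colorings as nodes, adjacent iff they differ on exactly one vertex. For $T\subseteq V(G)$, label each coloring $\gamma$ by $\gamma|_T$. A label component is a maximal set of colorings with the same label inducing a connected subgraph of $\mathcal{C}_k(G)$. The contracted solution graph $\mathcal{C}^c_k(G,T)=(H,\ell)$ has one node $x$ per label component $S_x$, distinct $x,y$ adjacent iff some $\gamma\in S_x,\gamma'\in S_y$ are adjacent in $\mathcal{C}_k(G)$, and $\ell(x)$ the common label on $S_x$. For $1\le m\le k$, a labeled graph $(H,\ell)$ is $(m,k)$-color-complete if there is a set $T$ with $|T|=m$ such that every label is a $k$-coloring of the complete graph on $T$, every such $k$-coloring is the label of exactly one node, and two nodes are adjacent iff their labels differ on exactly one element of $T$. $(H,\ell)$ satisfies the injective neighborhood property if any two distinct neighbors of any node have distinct labels. *)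

(* Defs.v *)
From mathcomp Require Import all_boot.
Set Implicit Arguments. Unset Strict Implicit. Unset Printing Implicit Defensive.

Section Defs.
Variable V : finType.
Variable e : rel V.   (* the graph G: e is assumed symmetric and irreflexive *)

Definition induced_cycle (n : nat) (c : 'I_n -> V) : Prop :=
  injective c /\
  forall i j : 'I_n,
    e (c i) (c j) = (val j == (val i).+1 %% n) || (val i == (val j).+1 %% n).

Definition chordal : Prop :=
  forall (n : nat) (c : 'I_n -> V), 3 < n -> ~ induced_cycle c.

Definition clique (T : {set V}) : Prop :=
  forall u w, u \in T -> w \in T -> u != w -> e u w.

(* k-colorings are maps V -> 'I_k (colors {1..k} encoded as 0..k-1) *)
Definition is_coloring (k : nat) (g : {ffun V -> 'I_k}) : Prop :=
  forall u w, e u w -> g u != g w.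

Definition k_colorable (k : nat) : Prop := exists g : {ffun V -> 'I_k}, is_coloring g.

Definition recol_adj (k : nat) (g g' : {ffun V -> 'I_k}) : bool :=
  #|[set x | g x != g' x]| == 1.

(* label of a coloring: its restriction to T, encoded as a partial map *)
Definition restr (k : nat) (T : {set V}) (g : {ffun V -> 'I_k})
  : {ffun V -> option 'I_k} :=
  [ffun u => if u \in T then Some (g u) else None].

Definition same_label_connected (k : nat) (T : {set V})
  (S : {set {ffun V -> 'I_k}}) : Prop :=
  S != set0 /\
  (forall g, g \in S -> is_coloring g) /\
  (forall g g', g \in S -> g' \in S -> restr T g = restr T g') /\
  (forall g g', g \in S -> g' \in S ->
     connect [rel a b | [&& a \in S, b \in S & recol_adj a b]] g g').

Definition label_component (k : nat) (T : {set V})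
  (S : {set {ffun V -> 'I_k}}) : Prop :=
  same_label_connected T S /\
  forall S', same_label_connected T S' -> S \subset S' -> S' = S.

(* The contracted solution graph C^c_k(G,T) = (H, l):
   nodes are the label components, *)
Definition csg_node (k : nat) (T : {set V}) (S : {set {ffun V -> 'I_k}}) : Prop :=
  label_component T S.

Definition csg_adj (k : nat) (S S' : {set {ffun V -> 'I_k}}) : Prop :=
  S != S' /\ exists g g', [/\ g \in S, g' \in S' & recol_adj g g'].

Definition csg_lab (k : nat) (T : {set V}) (S : {set {ffun V -> 'I_k}})
  : {ffun V -> option 'I_k} :=
  match [pick g in S] with
  | Some g => restr T g
  | None => [ffun => None]
  end.

Section Labeled.
Variables (N : Type) (node : N -> Prop) (adj : N -> N -> Prop).
Variable k : nat.
Variable lab : N -> {ffun V -> option 'I_k}.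

(* f is a k-coloring of the complete graph on T' (as a partial map with
   domain exactly T') *)
Definition clique_coloring (T' : {set V}) (f : {ffun V -> option 'I_k}) : Prop :=
  (forall u, (f u != None) = (u \in T')) /\
  (forall u w, u \in T' -> w \in T' -> u != w -> f u != f w).

Definition color_complete (m : nat) : Prop :=
  exists T' : {set V}, #|T'| = m /\
    (forall x, node x -> clique_coloring T' (lab x)) /\
    (forall f, clique_coloring T' f -> exists! x, node x /\ lab x = f) /\
    (forall x y, node x -> node y ->
       (adj x y <-> #|[set u in T' | lab x u != lab y u]| = 1)).

Definition forest : Prop :=
  forall (n : nat) (c : 'I_n -> N), 3 <= n -> injective c ->
    (forall i, node (c i)) ->
    ~ (forall i j : 'I_n, val j = (val i).+1 %% n -> adj (c i) (c j)).

Definition inj_nbhd : Prop :=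
  forall x y z, node x -> node y -> node z -> adj x y -> adj x z -> y <> z ->
    lab y != lab z.
End Labeled.
End Defs.

(* Main.v *)
Require Import Defs.
From mathcomp Require Import all_boot zify.
Set Implicit Arguments. Unset Strict Implicit. Unset Printing Implicit Defensive.

Section Infra.
Variables (V : finType) (e : rel V) (k : nat).
Hypothesis symE : symmetric e.
Hypothesis eirr : irreflexive e.

Notation col := {ffun V -> 'I_k}.

Definition colb (g : col) : bool := [forall u, forall w, e u w ==> (g u != g w)].

Lemma colP g : reflect (is_coloring e g) (colb g).
Proof.
apply: (iffP forallP) => [H u w euw|H u]; first by move/forallP: (H u) => /(_ w); rewrite euw.
by apply/forallP => w; apply/implyP => euw; apply: H.
Qed.

Definition rX (X : {set V}) : rel col :=
  fun a b => [&& colb a, colb b, restr X a == restr X b & recol_adj a b].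

Definition conn X := connect (rX X).
Definition C X g := [set h | conn X g h].

Lemma recol_adj_sym : symmetric (@recol_adj V k).
Proof.
move=> a b; rewrite /recol_adj; congr (_ == _); apply: eq_card => x; rewrite !inE eq_sym //.
Qed.

Lemma rX_sym X : symmetric (rX X).
Proof. by move=> a b; rewrite /rX recol_adj_sym (eq_sym (restr X a)); case: (colb a); case: (colb b). Qed.

Lemma conn_sym X a b : conn X a b = conn X b a.
Proof. exact: (sym_connect_sym (rX_sym X)). Qed.

Lemma conn_trans X a b c : conn X a b -> conn X b c -> conn X a c.
Proof. exact: connect_trans. Qed.

Lemma conn_inv X a b : conn X a b -> a = b \/ [/\ colb a, colb b & restr X a = restr X b].
Proof.
case/connectP => p; elim: p a => [|y p IH] a /=; first by move=> _ ->; left.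
case/andP => /and4P [ca cy /eqP ray _] pth Hb.
case: (IH y pth Hb) => [<-|[_ cl rl]]; right.
  by split.
by split => //; rewrite ray.
Qed.

Lemma conn_col X a b : colb a -> conn X a b -> colb b /\ restr X a = restr X b.
Proof. by move=> ca /conn_inv [<-|[]]. Qed.

Lemma conn1 X a b : colb a -> colb b -> restr X a = restr X b -> recol_adj a b -> conn X a b.
Proof. by move=> ca cb rab ab; apply: connect1; rewrite /rX ca cb rab eqxx ab. Qed.

Lemma restr_sub (X Y : {set V}) (a b : col) : Y \subset X -> restr X a = restr X b -> restr Y a = restr Y b.
Proof.
move=> sYX rab; apply/ffunP => u; rewrite !ffunE; case: ifP => // uY.
by move/ffunP: rab => /(_ u); rewrite !ffunE (subsetP sYX u uY).
Qed.

Lemma conn_sub (X Y : {set V}) a b : Y \subset X -> conn X a b -> conn Y a b.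
Proof.
move=> sYX; apply: connect_sub => x y /and4P [cx cy /eqP rxy xy].
by apply: connect1; rewrite /rX cx cy xy (restr_sub sYX rxy) eqxx.
Qed.

Lemma C_eq X a b : colb a -> (C X a == C X b) = conn X a b.
Proof.
move=> ca; apply/eqP/idP => [E|ab].
  have : b \in C X b by rewrite inE /conn connect0.
  by rewrite -E inE.
apply/setP => x; rewrite !inE; apply/idP/idP => H.
  by apply: conn_trans H; rewrite conn_sym.
exact: conn_trans ab H.
Qed.

Definition rS (S : {set col}) : rel col := [rel a b | [&& a \in S, b \in S & recol_adj a b]].

Lemma conn_in X (S : {set col}) a b : (forall y, conn X a y -> y \in S) -> conn X a b -> connect (rS S) a b.
Proof.
move=> HS /connectP [p]; elim: p a HS => [|y p IH] a HS /=; first by move=> _ ->; apply: connect0.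
case/andP => ray pth Hb.
have cay : conn X a y by apply: connect1.
apply: (connect_trans (y := y)).
  apply: connect1; rewrite /rS /= HS /conn ?connect0 // HS //.
  by case/and4P: ray.
apply: IH pth Hb => z yz; apply: HS; exact: conn_trans cay yz.
Qed.

Lemma slc_sub X S g : same_label_connected e X S -> g \in S -> S \subset C X g.
Proof.
move=> [_ [Hc [Hl Hcn]]] gS; apply/subsetP => h hS; rewrite inE.
move: (Hcn g h gS hS); apply: connect_sub => x y /and3P [xS yS xy].
apply: connect1; rewrite /rX xy (Hl x y xS yS) eqxx.
by rewrite (introT (colP _) (Hc x xS)) (introT (colP _) (Hc y yS)).
Qed.

Lemma C_slc X g : colb g -> same_label_connected e X (C X g).
Proof.
move=> cg; split; first by apply/set0Pn; exists g; rewrite inE /conn connect0.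
split; first by move=> h; rewrite inE => /(conn_col cg) [/colP].
split.
  move=> h h'; rewrite !inE => /(conn_col cg) [_ <-] /(conn_col cg) [_ <-] //.
move=> h h'; rewrite !inE => gh gh'.
have Hin : forall y, conn X g y -> y \in C X g by move=> y; rewrite inE.
apply: (connect_trans (y := g)).
  rewrite (sym_connect_sym _); first exact: conn_in Hin gh.
  by move=> x y; rewrite /rS /= recol_adj_sym; case: (x \in _); case: (y \in _).
exact: conn_in Hin gh'.
Qed.

Lemma C_lc X g : colb g -> label_component e X (C X g).
Proof.
move=> cg; split; first exact: C_slc.
move=> S' H' sub; apply/eqP; rewrite eqEsubset sub andbT.
apply: slc_sub H' _; apply: (subsetP sub); rewrite inE /conn connect0 //.
Qed.

Lemma lc_C X S g : label_component e X S -> g \in S -> colb g /\ S = C X g.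
Proof.
move=> [H Hmax] gS.
have cg : colb g by apply/colP; case: H => _ [Hc _]; apply: Hc.
split=> //; symmetry; apply: Hmax; first exact: C_slc.
exact: slc_sub.
Qed.

Lemma nodeP X S : csg_node e X S <-> exists g, colb g /\ S = C X g.
Proof.
split.
  move=> H; case: (H) => [[/set0Pn [g gS] _] _]; exists g; exact: lc_C H gS.
by move=> [g [cg ->]]; apply: C_lc.
Qed.

Lemma lab_C X g : colb g -> csg_lab X (C X g) = restr X g.
Proof.
move=> cg; rewrite /csg_lab; case: pickP => [h|/(_ g)]; last by rewrite inE /conn connect0.
by rewrite inE => /(conn_col cg) [_ ->].
Qed.

Lemma adjP X a b : colb a -> colb b ->
  csg_adj (C X a) (C X b) <-> (~~ conn X a b /\ exists a' b', [/\ conn X a a', conn X b b' & recol_adj a' b']).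
Proof.
move=> ca cb; rewrite /csg_adj (C_eq _ _ ca); split=> [[H [a' [b' [Ha Hb Hab]]]]|[H [a' [b' [Ha Hb Hab]]]]].
  by split=> //; exists a', b'; move: Ha Hb; rewrite !inE.
by split=> //; exists a', b'; rewrite !inE.
Qed.

Lemma adj_diff (a b : col) : recol_adj a b -> exists u, forall w, (a w != b w) = (w == u).
Proof.
rewrite /recol_adj => /cards1P [u Hu]; exists u => w.
by move/setP: Hu => /(_ w); rewrite !inE.
Qed.
End Infra.

Section Count.
Variables (V : finType) (e : rel V) (k : nat).
Notation col := {ffun V -> 'I_k}.

Lemma clique_inj X (g : col) : clique e X -> colb e g -> {in X &, injective g}.
Proof.
move=> cX cg u w uX wX guw; apply/eqP; apply/negPn/negP => uw.
by move/colP: cg => /(_ u w (cX u w uX wX uw)); rewrite guw eqxx.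
Qed.

Lemma card_img X (g : col) : clique e X -> colb e g -> #|g @: X| = #|X|.
Proof. by move=> cX cg; apply: card_in_imset; apply: clique_inj. Qed.

Lemma clique_le X (g : col) : clique e X -> colb e g -> #|X| <= k.
Proof.
move=> cX cg; rewrite -(card_img cX cg); apply: leq_trans (max_card _) _.
by rewrite card_ord.
Qed.

Lemma avoid (A : {set 'I_k}) : #|A| < k -> exists c, c \notin A.
Proof.
move=> Hlt; have : 0 < #|~: A| by rewrite cardsCs setCK card_ord; lia.
by case/card_gt0P => c; rewrite inE => H; exists c.
Qed.

Lemma pigeon (A : {set 'I_k}) p q r : #|A| + 2 = k -> p \notin A -> q \notin A -> r \notin A ->
  p != r -> q != r -> p = q.
Proof.
move=> HA pA qA rA pr qr.
have : #|~: A| == 2 by rewrite cardsCs setCK card_ord; apply/eqP; lia.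
case/cards2P => x [y [xy HC]].
have : [/\ p \in ~: A, q \in ~: A & r \in ~: A] by rewrite !inE pA qA rA.
rewrite HC !inE => [[/orP [] /eqP Hp /orP [] /eqP Hq /orP [] /eqP Hr]]; subst;
  by rewrite ?eqxx in pr qr *.
Qed.
End Count.

Lemma forest_seq (N : eqType) (node : N -> Prop) (adj : N -> N -> Prop) (r : rel N) :
  forest node adj -> (forall x y, r x y -> adj x y) ->
  forall s, 3 <= size s -> uniq s -> (forall x, x \in s -> node x) -> cycle r s -> False.
Proof.
move=> Hf Hr [//|x0 s'] Hs Hu Hn Hc.
set s := x0 :: s' in Hs Hu Hn Hc.
apply: (Hf (size s) (fun i => nth x0 s i) Hs).
- by move=> i j /eqP; rewrite nth_uniq // => /eqP /val_inj.
- by move=> i; apply: Hn; apply: mem_nth.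
move=> i j Hj; apply: Hr.
move: Hc; rewrite (cycle_path x0) => /(pathP x0) H.
case: (ltnP i.+1 (size s)) => Hi.
  rewrite modn_small // in Hj.
  have := H j; rewrite Hj => /(_ Hi) /=; done.
have Ei : (i : nat) = (size s).-1 by have := ltn_ord i; lia.
have Ej : (j : nat) = 0.
  rewrite Hj; have -> : (val i).+1 = size s by move: Ei Hs; rewrite /=; lia.
  by rewrite modnn.
have h0 : 0 < size s by [].
have := H 0 h0; rewrite /= -(nth_last x0).
have -> : nth x0 s j = x0 by rewrite Ej.
rewrite Ei /s; case: (s') Hs => //= y s'' _.
Qed.

Lemma uniq_flat (I T : eqType) (f : I -> seq T) (l : seq I) : uniq l -> (forall i, uniq (f i)) ->
  (forall i j x, i \in l -> j \in l -> x \in f i -> x \in f j -> i = j) ->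
  uniq (flatten [seq f i | i <- l]).
Proof.
elim: l => [//|a l IH] /= /andP [al ul] uf Hd.
rewrite cat_uniq uf IH //; last by move=> i j x il jl; apply: Hd; rewrite inE ?il ?jl orbT.
rewrite andbT; apply/hasPn => x /flatten_mapP [j jl xj]; apply/negP => xa.
have aj : a = j by apply: (Hd a j x) => //; rewrite inE ?eqxx ?jl ?orbT.
by rewrite aj jl in al.
Qed.

Lemma size_flat (I T : Type) (f : I -> seq T) (l : seq I) : (forall i, 0 < size (f i)) ->
  size l <= size (flatten [seq f i | i <- l]).
Proof.
move=> H; elim: l => [//|a l IH] /=; rewrite size_cat.
by have := H a; lia.
Qed.

Lemma path_flat (I : eqType) (T : Type) (r : rel T) (Q : rel I) (B : I -> T) (tl : I -> seq T) :
  forall l, (forall i, i \in l -> path r (B i) (tl i)) ->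
  (forall i j, Q i j -> r (last (B i) (tl i)) (B j)) ->
  forall i0, path Q i0 l -> path r (last (B i0) (tl i0)) (flatten [seq B i :: tl i | i <- l]).
Proof.
elim=> [//|j l IH] Hin Hq i0 /= /andP [q pl].
rewrite Hq //= cat_path Hin ?inE ?eqxx //= IH //.
by move=> i il; apply: Hin; rewrite inE il orbT.
Qed.

Section Main.
Variables (V : finType) (e : rel V) (k : nat).
Hypothesis symE : symmetric e.
Hypothesis eirr : irreflexive e.
Variables (T : {set V}) (v : V).
Hypothesis cT : clique e T.
Hypothesis vT : v \in T.
Notation col := {ffun V -> 'I_k}.
Notation T0 := (T :\ v).
Notation colb := (colb e).
Notation conn := (conn e).
Notation C := (C e).

Lemma T0sub : T0 \subset T.
Proof. exact: subsetDl. Qed.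

Lemma cT0 : clique e T0.
Proof. by move=> u w; rewrite !inE => /andP [_ uT] /andP [_ wT]; apply: cT. Qed.

Lemma card_T0 : #|T0| + 1 = #|T|.
Proof. by rewrite (cardsD1 v T) vT addnC. Qed.

Lemma restrT0_eq (a b : col) w : restr T0 a = restr T0 b -> w \in T -> w != v -> a w = b w.
Proof.
move/ffunP => /(_ w); rewrite !ffunE !inE => H wT wv; move: H; rewrite wT wv /=.
by case.
Qed.

Lemma restr_ext (a b : col) : restr T0 a = restr T0 b -> a v = b v -> restr T a = restr T b.
Proof.
move=> H Hv; apply/ffunP => w; rewrite !ffunE; case: ifP => // wT.
case: (eqVneq w v) => [->|wv]; first by rewrite Hv.
by rewrite (restrT0_eq H wT wv).
Qed.

Lemma restrT_v (a b : col) : restr T a = restr T b -> a v = b v.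
Proof. by move/ffunP => /(_ v); rewrite !ffunE vT; case. Qed.

Lemma restrT_T0 (a b : col) : restr T a = restr T b -> restr T0 a = restr T0 b.
Proof. exact: restr_sub T0sub. Qed.

Lemma connT_T0 (a b : col) : conn T a b -> conn T0 a b.
Proof. exact: conn_sub T0sub. Qed.

Lemma notin_img (a g : col) : colb g -> restr T0 g = restr T0 a -> g v \notin a @: T0.
Proof.
move=> cg H; apply/imsetP => [[w wT0 Hw]].
move: (wT0); rewrite !inE => /andP [wv wT].
rewrite -(restrT0_eq H wT wv) in Hw.
have vw : v != w by rewrite eq_sym.
by move/colP: cg => /(_ v w (cT vT wT vw)); rewrite Hw eqxx.
Qed.

Lemma col_neq (g : col) w1 w2 : colb g -> w1 \in T -> w2 \in T -> w1 != w2 -> g w1 != g w2.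
Proof. by move=> /colP cg h1 h2 h12; apply: cg; apply: cT. Qed.

Lemma diff_in X (a b : col) u : (forall w, (a w != b w) = (w == u)) ->
  restr X a != restr X b -> u \in X.
Proof.
move=> Hu; apply: contraNT => uX; apply/eqP/ffunP => w; rewrite !ffunE.
case: ifP => // wX; congr Some; apply/eqP; rewrite -[_ == _]negbK Hu.
by apply: contraNneq uX => <-.
Qed.

Lemma diff_eq (a b : col) u w : (forall w, (a w != b w) = (w == u)) -> w != u -> a w = b w.
Proof. by move=> Hu wu; apply/eqP; rewrite -[_ == _]negbK Hu (negbTE wu). Qed.

Section Part2.
Hypothesis HT : #|T| = k.-1.
Hypothesis Hinj : inj_nbhd (csg_node e T) (@csg_adj V k) (csg_lab T).

Lemma T0k : #|T0| + 2 = k.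
Proof. have := card_T0; have : 0 < #|T| by apply/card_gt0P; exists v. lia. Qed.

Lemma Lcol (a b c : col) : colb a -> colb b -> colb c ->
  restr T0 b = restr T0 a -> restr T0 c = restr T0 a -> a v != b v -> a v != c v -> b v = c v.
Proof.
move=> ca cb cc hb hc ab ac.
apply: (@pigeon k (a @: T0) _ _ (a v)); rewrite ?notin_img //.
- by rewrite (card_img cT0 ca) T0k.
- by rewrite eq_sym.
- by rewrite eq_sym.
Qed.

Lemma Luniq (y1 y2 z1 z2 : col) : colb y1 -> colb z1 -> colb z2 -> conn T y1 y2 ->
  recol_adj y1 z1 -> recol_adj y2 z2 -> restr T z1 = restr T z2 -> restr T y1 != restr T z1 ->
  conn T z1 z2.
Proof.
move=> cy1 cz1 cz2 c12 a1 a2 rz ry.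
have [cy2 ry12] := conn_col cy1 c12.
have E : C T y2 = C T y1 by apply/eqP; rewrite C_eq // conn_sym.
have A1 : csg_adj (C T y1) (C T z1).
  apply/adjP => //; split; last by exists y1, z1; split => //; apply: connect0.
  by apply/negP => /(conn_col cy1) [_ H]; rewrite H eqxx in ry.
have A2 : csg_adj (C T y1) (C T z2).
  apply/adjP => //; split; last by exists y2, z2; split => //; apply: connect0.
  by apply/negP => /(conn_col cy1) [_ H]; rewrite H -rz eqxx in ry.
case: (eqVneq (C T z1) (C T z2)) => [/eqP|ne]; first by rewrite C_eq.
have n1 : csg_node e T (C T y1) by apply/nodeP; exists y1.
have n2 : csg_node e T (C T z1) by apply/nodeP; exists z1.
have n3 : csg_node e T (C T z2) by apply/nodeP; exists z2.
have := Hinj n1 n2 n3 A1 A2 (elimN eqP ne).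
by rewrite !lab_C // rz eqxx.
Qed.

Definition Inv (a y : col) := conn T0 a y /\ (conn T a y \/ exists a' b',
  [/\ conn T a a', recol_adj a' b', a' v != b' v, colb b' & conn T b' y]).

Lemma Inv_step (a y z : col) : colb a -> Inv a y -> rX e T0 y z -> Inv a z.
Proof.
move=> ca [c0 H] ryz; have cy := (conn_col ca c0).1.
have ray := (conn_col ca c0).2.
case/and4P: (ryz) => _ cz /eqP ryz' ayz.
have c0z : conn T0 a z by apply: conn_trans c0 (connect1 ryz).
split=> //.
case: (eqVneq (restr T y) (restr T z)) => [E|NE].
  have yz : conn T y z by apply: conn1.
  case: H => [H|[a' [b' [H1 H2 H3 H4 H5]]]]; first by left; apply: conn_trans H yz.
  by right; exists a', b'; split => //; apply: conn_trans H5 yz.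
have yvz : y v != z v by apply: contra_neq NE; apply: restr_ext.
case: H => [H|[a' [b' [H1 H2 H3 H4 H5]]]].
  by right; exists y, z; split => //; apply: connect0.
left; apply: (conn_trans H1).
have [ca' ra'] := conn_col ca H1.
have [_ rb'] := conn_col H4 H5.
have ea : restr T0 a' = restr T0 y by rewrite -(restrT_T0 ra').
have hb : b' v = y v by apply: restrT_v.
have az : a' v = z v.
  by apply: (@Lcol y) => //; rewrite -hb eq_sym.
have raz : restr T a' = restr T z by apply: restr_ext => //; rewrite ea.
apply: (@Luniq b' y) => //.
- by rewrite recol_adj_sym.
- by apply: contra_neq H3 => /restrT_v ->.
Qed.

Lemma Inv_path (a : col) p : colb a -> forall y, path (rX e T0) y p -> Inv a y -> Inv a (last y p).
Proof.
move=> ca; elim: p => [|z p IH] y //= /andP [ryz pth] Hy.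
apply: IH pth _; exact: Inv_step ca Hy ryz.
Qed.

Lemma S1 (a b : col) : colb a -> conn T0 a b -> conn T a b \/ exists a' b',
  [/\ conn T a a', conn T b b', recol_adj a' b' & a' v != b' v].
Proof.
move=> ca ab.
have : Inv a b.
  case/connectP: ab => p pth ->.
  apply: (@Inv_path a p ca a pth); split; [apply: connect0 | left; apply: connect0].
case=> _ [H|[a' [b' [H1 H2 H3 H4 H5]]]]; first by left.
by right; exists a', b'; split => //; rewrite conn_sym.
Qed.

Lemma inj_T0 : inj_nbhd (csg_node e T0) (@csg_adj V k) (csg_lab T0).
Proof.
move=> X Y Z /nodeP [x [cx ->]] /nodeP [y [cy ->]] /nodeP [z [cz ->]] AXY AXZ YZ.
rewrite !lab_C //; apply/negP => /eqP ryz; apply: YZ; apply/eqP; rewrite C_eq //.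
case/(adjP _ cx cy): AXY => nxy [x1 [y1 [xx1 yy1 a1]]].
case/(adjP _ cx cz): AXZ => _ [x2 [z2 [xx2 zz2 a2]]].
have [cx1 rx1] := conn_col cx xx1.
have [cy1 ry1] := conn_col cy yy1.
have [cx2 rx2] := conn_col cx xx2.
have [cz2 rz2] := conn_col cz zz2.
have rxy1 : restr T0 x1 != restr T0 y1.
  apply/negP => /eqP E; move/negP: nxy; apply.
  apply: (conn_trans xx1); rewrite conn_sym in yy1; apply: conn_trans _ yy1.
  exact: conn1.
have rxz2 : restr T0 x2 != restr T0 z2.
  by rewrite -rx2 -rz2 -ryz ry1 rx1.
have [u1 Hu1] := adj_diff a1.
have [u2 Hu2] := adj_diff a2.
have u1T0 := diff_in Hu1 rxy1.
have u2T0 := diff_in Hu2 rxz2.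
move: (u1T0) (u2T0); rewrite !inE => /andP [u1v u1T] /andP [u2v u2T].
have vu1 : v != u1 by rewrite eq_sym.
have vu2 : v != u2 by rewrite eq_sym.
have xy1v : x1 v = y1 v by apply: diff_eq Hu1 _.
have xz2v : x2 v = z2 v by apply: diff_eq Hu2 _.
have ry1z2 : restr T0 y1 = restr T0 z2 by rewrite -ry1 -rz2 ryz.
have rx12 : restr T0 x1 = restr T0 x2 by rewrite -rx1 -rx2.
have xy1u : x1 u1 != y1 u1 by rewrite Hu1.
have u12 : u1 = u2.
  apply/eqP; apply/negP => /negP u12; move/negP: xy1u; apply; apply/eqP.
  rewrite (restrT0_eq rx12 u1T u1v) (diff_eq Hu2 u12).
  by rewrite (restrT0_eq ry1z2 u1T u1v).
subst u2.
have x12v : x1 v = x2 v.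
  apply: (@pigeon k (x1 @: T0) _ _ (y1 u1)).
  - by rewrite (card_img cT0 cx1) T0k.
  - exact: notin_img.
  - exact: notin_img.
  - apply/imsetP => [[w wT0 Hw]].
    move: (wT0); rewrite !inE => /andP [wv wT].
    case: (eqVneq w u1) => [E|wu1]; first by move: xy1u; rewrite Hw E eqxx.
    rewrite (diff_eq Hu1 wu1) in Hw.
    have u1w : u1 != w by rewrite eq_sym.
    by move: (col_neq cy1 u1T wT u1w); rewrite Hw eqxx.
  - by rewrite xy1v; apply: col_neq.
  - rewrite xz2v (restrT0_eq ry1z2 u1T u1v); exact: col_neq.
have cx12 : conn T x1 x2.
  have c0 : conn T0 x1 x2 by apply: conn_trans xx2; rewrite conn_sym.
  case: (S1 cx1 c0) => // [[a' [b' [H1 H2 H3 H4]]]].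
  have := (conn_col cx1 H1).2; have := (conn_col cx2 H2).2.
  move=> /restrT_v h2 /restrT_v h1.
  by rewrite -h1 -h2 x12v eqxx in H4.
have cyz : conn T y1 z2.
  apply: (@Luniq x1 x2) => //.
  - by apply: restr_ext => //; rewrite -xy1v x12v.
  - by apply: contra_neq rxy1 => /restrT_T0.
apply: (conn_trans yy1); apply: (conn_trans (connT_T0 cyz)).
by rewrite conn_sym.
Qed.

Hypothesis Hfor : forest (csg_node e T) (@csg_adj V k).

Definition adjb (S S' : {set col}) : bool :=
  (S != S') && [exists g in S, exists g' in S', recol_adj g g'].

Lemma adjb_adj S S' : adjb S S' -> csg_adj S S'.
Proof.
case/andP => ne /exists_inP [g gS /exists_inP [g' g'S a]]; split => //.
by exists g, g'.
Qed.

Lemma adjb_C (a b a' b' : col) : C T a != C T b -> a' \in C T a -> b' \in C T b ->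
  recol_adj a' b' -> adjb (C T a) (C T b).
Proof.
move=> ne ha hb ab; rewrite /adjb ne /=.
by apply/exists_inP; exists a' => //; apply/exists_inP; exists b'.
Qed.

Lemma forest_T0 : forest (csg_node e T0) (@csg_adj V k).
Proof.
case=> [//|n'] c Hn cinj cnode cadj.
have n0 : 0 < n'.+1 by [].
pose nxt (i : 'I_n'.+1) : 'I_n'.+1 := Ordinal (ltn_pmod i.+1 n0).
have : forall i : 'I_n'.+1, exists p : col * col,
    [/\ p.1 \in c i, p.2 \in c (nxt i) & recol_adj p.1 p.2].
  move=> i; have := cadj i (nxt i) erefl.
  by case=> _ [g [g' [H1 H2 H3]]]; exists (g, g').
case/fin_all_exists => P HP.
pose nx i := i.+1 %% n'.+1.
pose cN i := c (inord i).
pose xN i := (P (inord i)).1.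
pose yN i := (P (inord i)).2.
have nxlt i : nx i < n'.+1 by apply: ltn_pmod.
have F1 i : xN i \in cN i by case: (HP (inord i)).
have F2 i : i < n'.+1 -> yN i \in cN (nx i).
  move=> Hi; case: (HP (inord i)) => _ H _; rewrite /cN.
  suff -> : inord (nx i) = nxt (inord i) :> 'I_n'.+1 by [].
  by apply: val_inj; rewrite /= inordK // inordK.
have F3 i : recol_adj (xN i) (yN i) by case: (HP (inord i)).
have Nd i g : g \in cN i -> colb g /\ cN i = C T0 g.
  by move=> gi; apply: lc_C => //; apply: cnode.
have cinjN i j : i < n'.+1 -> j < n'.+1 -> cN i = cN j -> i = j.
  move=> Hi Hj /cinj H; by rewrite -(inordK Hi) -(inordK Hj) H.
have Ceq i j g h : i < n'.+1 -> j < n'.+1 -> g \in cN i -> h \in cN j -> C T g = C T h -> i = j.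
  move=> Hi Hj gi hj E; apply: cinjN => //.
  have [cg ->] := Nd _ _ gi; have [ch ->] := Nd _ _ hj.
  by apply/eqP; rewrite C_eq //; apply: connT_T0; rewrite -C_eq // E.
have nxE i : i < n'.+1 -> nx i = if i == n' then 0 else i.+1.
  move=> Hi; rewrite /nx; case: eqP => [->|ne]; first by rewrite modnn.
  rewrite modn_small //; lia.
have nxinj i j : i < n'.+1 -> j < n'.+1 -> nx i = nx j -> i = j.
  move=> Hi Hj; rewrite (nxE i Hi) (nxE j Hj); do 2 case: eqP; lia.
pose B i := C T (yN i).
pose tl i := if C T (yN i) == C T (xN (nx i)) then [::] else [:: C T (xN (nx i))].
have lastB i : last (B i) (tl i) = C T (xN (nx i)).
  by rewrite /tl /B; case: eqP.
have memB i X : i < n'.+1 -> X \in B i :: tl i -> exists g, [/\ g \in cN (nx i), colb g & X = C T g].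
  move=> Hi; rewrite /tl; case: eqP => _; rewrite !inE; [move=> /eqP -> | case/orP => /eqP ->].
  - by exists (yN i); split; [exact: F2 Hi | exact: (Nd _ _ (F2 i Hi)).1 | by []].
  - by exists (yN i); split; [exact: F2 Hi | exact: (Nd _ _ (F2 i Hi)).1 | by []].
  - by exists (xN (nx i)); split; [exact: F1 | exact: (Nd _ _ (F1 _)).1 | by []].
pose s := flatten [seq B i :: tl i | i <- iota 0 n'.+1].
apply: (@forest_seq _ _ _ adjb Hfor adjb_adj s).
- apply: leq_trans Hn _; rewrite -{1}(size_iota 0 n'.+1); exact: size_flat.
- apply: uniq_flat; first exact: iota_uniq.
    move=> i /=; rewrite /tl; case: eqP => //= ne; rewrite inE andbT.
    by apply/negP => /eqP.
  move=> i j X; rewrite !mem_iota /= => Hi Hj /(memB _ _ Hi) [g [g1 cg ->]].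
  case/(memB _ _ Hj) => h [h1 ch E].
  by apply: nxinj => //; apply: (Ceq _ _ g h) => //.
- move=> X /flatten_mapP [i]; rewrite mem_iota /= => Hi /(memB _ _ Hi) [g [_ cg ->]].
  by apply/nodeP; exists g.
have lasts : last (B 0) s = last (B n') (tl n').
  by rewrite /s -addn1 iotaD map_cat flatten_cat last_cat /= cats0.
rewrite (cycle_path (B 0)) lasts.
pose Q i j := (j == nx i) && (i < n'.+1).
apply: (@path_flat _ _ adjb Q B tl).
- move=> i; rewrite mem_iota /= => Hi; rewrite /tl; case: eqP => //= /eqP ne; rewrite andbT.
  have [cy Ey] := Nd _ _ (F2 i Hi).
  have cyx : conn T0 (yN i) (xN (nx i)) by move: (F1 (nx i)); rewrite Ey inE.
  case: (S1 cy cyx) => [H|[a' [b' [H1 H2 H3 _]]]].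
    by rewrite C_eq // H in ne.
  apply: adjb_C ne _ _ H3; rewrite inE //.
- move=> i j /andP [/eqP -> Hi]; rewrite lastB /B.
  apply: (adjb_C (a' := xN (nx i)) (b' := yN (nx i))); last exact: F3.
  + apply/eqP => E.
    have := Ceq _ _ _ _ (nxlt i) (nxlt (nx i)) (F1 _) (F2 _ (nxlt i)) E.
    rewrite (nxE (nx i) (nxlt i)); case: eqP => *; lia.
  + by rewrite inE /conn connect0.
  + by rewrite inE /conn connect0.
have Hp : forall len i, i.+1 + len <= n'.+1 -> path Q i (iota i.+1 len).
  elim=> [//|len IH] i Hl /=; rewrite IH; last lia.
  rewrite /Q (nxE i); last lia.
  have -> : (i == n') = false by apply/eqP; lia.
  rewrite eqxx /=; lia.
rewrite /= (Hp n' 0) // andbT /Q (nxE n') // eqxx /=.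
by rewrite ltnSn.
Qed.
End Part2.

Lemma ccol X (g : col) : clique e X -> colb g -> clique_coloring X (restr X g).
Proof.
move=> cX cg; split=> [u|u w uX wX uw]; rewrite !ffunE; first by case: ifP.
rewrite uX wX; apply/negP => /eqP [E].
by move/colP: cg => /(_ u w (cX u w uX wX uw)); rewrite E eqxx.
Qed.

Section Full.
Hypothesis HTk : #|T| = k.

Lemma full_same (a b : col) : colb a -> colb b -> recol_adj a b -> restr T a = restr T b.
Proof.
move=> ca cb ab; have [u Hu] := adj_diff ab.
case: (boolP (u \in T)) => uT; last first.
  apply/ffunP => w; rewrite !ffunE; case: ifP => // wT; congr Some.
  by apply: (diff_eq Hu); apply: contraNneq uT => <-.
have full : a @: T = setT.
  apply/eqP; rewrite eqEcard subsetT cardsT card_ord /=.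
  by rewrite (card_img cT ca) HTk.
have : b u \in a @: T by rewrite full inE.
case/imsetP => w wT Hw; case: (eqVneq w u) => [E|wu].
  by move: (Hu u); rewrite Hw E !eqxx.
rewrite (diff_eq Hu wu) in Hw.
have uw : u != w by rewrite eq_sym.
by move: (col_neq cb uT wT uw); rewrite Hw eqxx.
Qed.

Lemma full_noadj (S S' : {set col}) : csg_node e T0 S -> csg_node e T0 S' -> ~ csg_adj S S'.
Proof.
move=> /nodeP [a [ca ->]] /nodeP [b [cb ->]] /(adjP _ ca cb) [nab [a' [b' [H1 H2 H3]]]].
have [ca' _] := conn_col ca H1; have [cb' _] := conn_col cb H2.
move/negP: nab; apply; apply: (conn_trans H1); apply: (@conn_trans _ _ _ _ _ b').
  by apply: conn1 => //; apply: restrT_T0; apply: full_same.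
by rewrite conn_sym.
Qed.
End Full.

Section Part1.
Hypothesis HT : #|T| = k.-1.
Hypothesis Hex : forall f : {ffun V -> option 'I_k}, clique_coloring T f -> exists! x, csg_node e T x /\ csg_lab T x = f.
Hypothesis Hadj : forall x y : {set col}, csg_node e T x -> csg_node e T y ->
  (csg_adj x y <-> #|[set u in T | csg_lab T x u != csg_lab T y u]| = 1).

Lemma U (g1 g2 : col) : colb g1 -> colb g2 -> restr T0 g1 = restr T0 g2 -> conn T0 g1 g2.
Proof.
move=> c1 c2 r12.
have n1 : csg_node e T (C T g1) by apply/nodeP; exists g1.
have n2 : csg_node e T (C T g2) by apply/nodeP; exists g2.
case: (eqVneq (g1 v) (g2 v)) => [Ev|Nv].
  have rT := restr_ext r12 Ev.
  have [x [[nx lx] Hu]] := Hex (ccol cT c1).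
  have E1 := Hu _ (conj n1 (lab_C _ c1)).
  have E2 : x = C T g2 by apply: Hu; split => //; rewrite lab_C // rT.
  apply: connT_T0; rewrite -C_eq // -E1 E2 //.
have : csg_adj (C T g1) (C T g2).
  apply/Hadj => //; rewrite !lab_C //.
  have -> : [set u in T | restr T g1 u != restr T g2 u] = [set v].
    apply/setP => u; rewrite !inE !ffunE; case: (boolP (u \in T)) => uT /=.
      case: (eqVneq u v) => [->|uv]; first by rewrite Nv.
      by rewrite (restrT0_eq r12 uT uv) eqxx.
    by apply/esym/negP => /eqP E; rewrite E vT in uT.
  exact: cards1.
case/(adjP _ c1 c2) => _ [a' [b' [H1 H2 H3]]].
have [ca' ra'] := conn_col c1 H1; have [cb' rb'] := conn_col c2 H2.
apply: (conn_trans (connT_T0 H1)); apply: (@conn_trans _ _ _ _ _ b').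
  by apply: conn1 => //; rewrite -(restrT_T0 ra') -(restrT_T0 rb').
by rewrite conn_sym; apply: connT_T0.
Qed.

Definition upd (F : {ffun V -> option 'I_k}) (c : 'I_k) : {ffun V -> option 'I_k} :=
  [ffun w => if w == v then Some c else F w].

Lemma upd_cc (g : col) c : colb g -> c \notin g @: T0 -> clique_coloring T (upd (restr T g) c).
Proof.
move=> cg cA; split=> [u|u w uT wT uw]; rewrite !ffunE.
  by case: (eqVneq u v) => [->|_]; [rewrite vT | case: ifP].
rewrite uT wT; case: (eqVneq u v) => [Eu|nu]; case: (eqVneq w v) => [Ew|nw].
- by rewrite Eu Ew eqxx in uw.
- apply/negP => /eqP [E]; move/negP: cA; apply; apply/imsetP; exists w => //.
  by rewrite !inE wT nw.
- apply/negP => /eqP [E]; move/negP: cA; apply; apply/imsetP; exists u => //.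
  by rewrite !inE uT nu.
- apply/negP => /eqP [E].
  by move/colP: cg => /(_ u w (cT uT wT uw)); rewrite E eqxx.
Qed.

Lemma upd_T0 (g a : col) c : restr T g = upd (restr T a) c -> restr T0 g = restr T0 a.
Proof.
move/ffunP => H; apply/ffunP => w; rewrite !ffunE !inE.
case: (eqVneq w v) => //= wv; case: ifP => // wT.
by move: (H w); rewrite !ffunE wT (negbTE wv).
Qed.

Lemma part1 (g0 : col) : colb g0 ->
  color_complete (csg_node e T0) (@csg_adj V k) (csg_lab T0) (k - 2).
Proof.
move=> cg0; exists T0; split.
  have := card_T0; have : 0 < #|T| by apply/card_gt0P; exists v. lia.
split.
  by move=> x /nodeP [g [cg ->]]; rewrite lab_C //; apply: ccol cT0 cg.
split.
  move=> f [fdom finj].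
  pose A := [set odflt (g0 v) (f u) | u in T0].
  have [c cA] : exists c, c \notin A.
    apply: avoid; apply: leq_ltn_trans (leq_imset_card _ _) _.
    have := card_T0; have : 0 < #|T| by apply/card_gt0P; exists v. lia.
  pose F : {ffun V -> option 'I_k} := [ffun w => if w == v then Some c else f w].
  have fin u : u \in T0 -> f u = Some (odflt (g0 v) (f u)).
    by rewrite -fdom; case: (f u).
  have ccF : clique_coloring T F.
    split=> [u|u w uT wT uw]; rewrite !ffunE.
      case: (eqVneq u v) => [->|nu]; first by rewrite vT.
      by rewrite fdom !inE nu.
    case: (eqVneq u v) => [Eu|nu]; case: (eqVneq w v) => [Ew|nw].
    - by rewrite Eu Ew eqxx in uw.
    - have wT0 : w \in T0 by rewrite !inE wT nw.
      rewrite (fin _ wT0); apply/negP => /eqP [E]; move/negP: cA; apply.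
      by apply/imsetP; exists w.
    - have uT0 : u \in T0 by rewrite !inE uT nu.
      rewrite (fin _ uT0); apply/negP => /eqP [E]; move/negP: cA; apply.
      by apply/imsetP; exists u.
    - by apply: finj => //; rewrite !inE ?uT ?wT ?nu ?nw.
  have [x [[/nodeP [g [cg Ex]] lx] _]] := Hex ccF.
  rewrite Ex lab_C // in lx.
  have rg : restr T0 g = f.
    apply/ffunP => u; rewrite !ffunE; case: ifP => uT0.
      move: uT0 (uT0); rewrite !inE => /andP [uv uT] uT0.
      by move/ffunP: lx => /(_ u); rewrite !ffunE uT (negbTE uv).
    by move: (fdom u); rewrite uT0 => /negbFE /eqP ->.
  exists (C T0 g); split.
    by split; [apply/nodeP; exists g | rewrite lab_C].
  move=> x' [/nodeP [h [ch ->]]]; rewrite lab_C // => rh.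
  by apply/eqP; rewrite C_eq //; apply: U => //; rewrite rg rh.
move=> x y /nodeP [a [ca ->]] /nodeP [b [cb ->]]; rewrite !lab_C //.
split.
  case/(adjP _ ca cb) => nab [a' [b' [H1 H2 H3]]].
  have [ca' ra'] := conn_col ca H1; have [cb' rb'] := conn_col cb H2.
  have [u Hu] := adj_diff H3.
  have ne : restr T0 a' != restr T0 b'.
    apply/negP => /eqP E; move/negP: nab; apply.
    apply: (conn_trans H1); apply: (@conn_trans _ _ _ _ _ b'); first exact: conn1.
    by rewrite conn_sym.
  have uT0 := diff_in Hu ne.
  rewrite ra' rb'.
  have -> : [set w in T0 | restr T0 a' w != restr T0 b' w] = [set u].
    apply/setP => w; rewrite in_set1 in_set !ffunE.
    case: (boolP (w \in T0)) => wT0 /=.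
      by rewrite (inj_eq (@Some_inj _)) Hu.
    by apply/esym/negP => /eqP E; rewrite E uT0 in wT0.
  exact: cards1.
move/eqP/cards1P => [u Hu].
have : u \in [set w in T0 | restr T0 a w != restr T0 b w] by rewrite Hu inE.
rewrite in_set !ffunE => /andP [uT0 nab]; rewrite uT0 (inj_eq (@Some_inj _)) in nab.
move: (uT0); rewrite !inE => /andP [uv uT].
have eqw w : w \in T0 -> w != u -> a w = b w.
  move=> wT0 wu; apply/eqP; apply/negP => /negP H.
  have : w \in [set w in T0 | restr T0 a w != restr T0 b w].
    by rewrite in_set wT0 !ffunE wT0 (inj_eq (@Some_inj _)).
  by rewrite Hu inE (negbTE wu).
have [c cA] : exists c, c \notin b u |: (a @: T0).
  apply: avoid; rewrite cardsU1 (card_img cT0 ca).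
  have := card_T0; have : 0 < #|T| by apply/card_gt0P; exists v. case: (_ \notin _); lia.
move: cA; rewrite inE negb_or => /andP [cbu caT0].
have cbT0 : c \notin b @: T0.
  apply/imsetP => -[w wT0 Ew].
  case: (eqVneq w u) => [E|wu]; first by move: cbu; rewrite inE Ew E eqxx.
  by move/negP: caT0; apply; apply/imsetP; exists w => //; rewrite Ew eqw.
have [x1 [[/nodeP [a1 [ca1 E1]] l1] _]] := Hex (upd_cc ca caT0).
have [x2 [[/nodeP [a2 [ca2 E2]] l2] _]] := Hex (upd_cc cb cbT0).
rewrite E1 lab_C // in l1; rewrite E2 lab_C // in l2.
have : csg_adj x1 x2.
  apply/Hadj; [by apply/nodeP; exists a1 | by apply/nodeP; exists a2 | ].
  rewrite E1 E2 !lab_C // l1 l2.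
  have -> : [set w in T | upd (restr T a) c w != upd (restr T b) c w] = [set u].
    apply/setP => w; rewrite !inE !ffunE.
    case: (eqVneq w v) => [->|wv]; first by rewrite vT eqxx andbF; apply/esym/eqP => E; rewrite E eqxx in uv.
    case: (boolP (w \in T)) => wT /=; last by apply/esym/eqP => E; rewrite E uT in wT.
    have wT0 : w \in T0 by rewrite !inE wv.
    case: (eqVneq w u) => [->|wu]; first by rewrite (inj_eq (@Some_inj _)) nab.
    by rewrite (eqw w wT0 wu) eqxx.
  exact: cards1.
rewrite E1 E2 => /(adjP _ ca1 ca2) [_ [a'' [b'' [H1 H2 H3]]]].
have [ca'' ra''] := conn_col ca1 H1; have [cb'' rb''] := conn_col ca2 H2.
apply/(adjP _ ca cb); split.
  apply/negP => /(conn_col ca) [_ E].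
  by move/ffunP: E => /(_ u); rewrite !ffunE uT0 => [[]] E; rewrite E eqxx in nab.
exists a'', b''; split => //.
- apply: U => //; apply/esym; apply: (@upd_T0 _ _ c); by rewrite -ra'' l1.
- apply: U => //; apply/esym; apply: (@upd_T0 _ _ c); by rewrite -rb'' l2.
Qed.
End Part1.
End Main.
Unset Implicit Arguments. Set Strict Implicit. Set Printing Implicit Defensive.

Theorem lemma7 (V : finType) (e : rel V) (k : nat) :
  symmetric e -> irreflexive e -> chordal e -> k_colorable e k ->
  forall (T : {set V}) (v : V),
    clique e T -> k.-1 <= #|T| -> v \in T ->
    (color_complete (csg_node e T) (@csg_adj V k) (csg_lab T) k.-1 ->
     color_complete (csg_node e (T :\ v)) (@csg_adj V k) (csg_lab (T :\ v)) (k - 2))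
    /\
    (forest (csg_node e T) (@csg_adj V k) /\ inj_nbhd (csg_node e T) (@csg_adj V k) (csg_lab T) ->
     forest (csg_node e (T :\ v)) (@csg_adj V k) /\
     inj_nbhd (csg_node e (T :\ v)) (@csg_adj V k) (csg_lab (T :\ v))).
Proof.
move=> symE eirr _ [g0 cg0] T v cT HkT vT.
have cg0b : colb e g0 by apply/colP.
have HTle : #|T| <= k := clique_le cT cg0b.
have T0 : 0 < #|T| by apply/card_gt0P; exists v.
split.
  move=> [T' [HT' [Hlab [Hex Hadj]]]].
  have ET : T' = T.
    have nd : csg_node e T (C e T g0) by apply/nodeP; exists g0.
    have [Hd _] := Hlab _ nd; rewrite lab_C // in Hd.
    apply/setP => u; rewrite -Hd ffunE; by case: (u \in T).
  subst T'.
  exact: (part1 cT vT HT' Hex Hadj cg0b).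
move=> [Hf Hi].
have : #|T| = k \/ #|T| = k.-1 by lia.
case => HT; last by split; [exact: (forest_T0 cT vT HT Hi Hf) | exact: (inj_T0 cT vT HT Hi)].
have noadj := full_noadj (v := v) cT HT.
split.
  move=> n c Hn _ cnode cadj.
  have n0 : 0 < n by lia.
  have := cadj (Ordinal n0) (Ordinal (ltn_pmod 1 n0)) erefl.
  exact: noadj (cnode _) (cnode _).
by move=> x y z nx ny nz axy; exfalso; exact: noadj nx ny axy.
Qed.
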